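(* Let $p\in(0,1]$, $c\ge0$, $\beta<1$, $\delta\in(0,1)$ with $c<\frac12p+\frac12(\beta-1)p^2$, and let $R=\frac12$, $T=p+(1-p)\frac12-c$, $S=(1-p)\frac12$, $Q=p^2\frac12\beta+p(1-p)+(1-p)^2\frac12-c$. For an integer $k\ge1$ let \[V_k=T+\sum_{i=1}^{k-1}\delta^iQ+\delta^kS+\frac{\delta^{k+1}}{1-\delta}R\] be Player 1's payoff when Player 1 defects in rounds $1,\dots,k$ and cooperates afterwards, while Player 2 cooperates in round 1, defects in rounds $2,\dots,k+1$ and cooperates afterwards. Then: (i) if $\delta\ge\frac{Q-S}{R-S}=p\beta+(1-p)-\frac{2c}{p}$, then $V_1\ge V_k$ for all $k\ge1$ (defecting for only one round is optimal among these plans); (ii) if $\delta<\frac{Q-S}{R-S}=p\beta+(1-p)-\frac{2c}{p}$, then $V_{k+1}>V_k$ for every $k\ge1$, so it is optimal for Player 1 to defect indefinitely ($k\to\infty$).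
   Context: Model: two content providers in an infinitely repeated game choose each period to cooperate ($C$) or attack/defect ($D$). $p$: attack success probability; $c$: cost per attack; $\beta<1$: market degradation factor; $\delta$: discount factor. Stage payoffs: mutual cooperation $R$ each; a lone attacker $T$, the cooperator facing an attack $S$; mutual attack $Q$ each. The setting models Tit-for-Tat retaliation against $k$ consecutive defections. The condition on $c$ is the standing Prisoners' Dilemma assumption $T>R>Q>S$. *)

(* Defs.v *)
From HB Require Import structures.
From mathcomp Require Import all_boot all_order all_algebra.
Set Implicit Arguments. Unset Strict Implicit. Unset Printing Implicit Defensive.
Import Order.TTheory GRing.Theory Num.Theory.
Local Open Scope ring_scope.

Definition payR (R : realFieldType) : R := 1 / 2.
Definition payT (R : realFieldType) (p c : R) : R := p + (1 - p) * (1 / 2) - c.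
Definition payS (R : realFieldType) (p : R) : R := (1 - p) * (1 / 2).
Definition payQ (R : realFieldType) (p c beta : R) : R :=
  p ^+ 2 * (1 / 2) * beta + p * (1 - p) + (1 - p) ^+ 2 * (1 / 2) - c.

Definition Vk (R : realFieldType) (p c beta delta : R) (k : nat) : R :=
  payT p c + \sum_(1 <= i < k) delta ^+ i * payQ p c beta
  + delta ^+ k * payS p + delta ^+ k.+1 / (1 - delta) * payR R.

(* Main.v *)
Require Import Defs.
From HB Require Import structures.
From mathcomp Require Import all_boot all_order all_algebra.
From mathcomp Require Import ring lra.
Import Order.TTheory GRing.Theory Num.Theory.
Local Open Scope ring_scope.

Lemma Vk_diff (R : realFieldType) (p c beta delta : R) k :
  delta != 1 -> (1 <= k)%N ->
  Vk p c beta delta k.+1 - Vk p c beta delta k =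
  delta ^+ k * ((payQ p c beta - payS p) - delta * (payR R - payS p)).
Proof.
move=> hd hk; rewrite /Vk big_nat_recr //=.
have h1 : 1 - delta != 0 by rewrite subr_eq0 eq_sym.
rewrite !exprS; field; done.
Qed.

Theorem theorem5 (R : realFieldType) (p c beta delta : R)
  (hp0 : 0 < p) (hp1 : p <= 1) (hc : 0 <= c) (hbeta : beta < 1)
  (hd0 : 0 < delta) (hd1 : delta < 1)
  (hPD : c < 1 / 2 * p + 1 / 2 * (beta - 1) * p ^+ 2) :
  (payQ p c beta - payS p) / (payR R - payS p) = p * beta + (1 - p) - 2 * c / p
  /\ ((payQ p c beta - payS p) / (payR R - payS p) <= delta ->
        forall k : nat, (1 <= k)%N -> Vk p c beta delta k <= Vk p c beta delta 1)
  /\ (delta < (payQ p c beta - payS p) / (payR R - payS p) ->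
        forall k : nat, (1 <= k)%N -> Vk p c beta delta k < Vk p c beta delta k.+1).
Proof.
have hRS : payR R - payS p = p / 2 by rewrite /payR /payS; field.
have hRSp : 0 < payR R - payS p by rewrite hRS divr_gt0.
have hd : delta != 1 by rewrite lt_eqF.
have key : forall x : R, (x <= (payQ p c beta - payS p) / (payR R - payS p))
   = (x * (payR R - payS p) <= payQ p c beta - payS p).
  by move=> x; rewrite ler_pdivlMr.
have key2 : forall x : R, (x < (payQ p c beta - payS p) / (payR R - payS p))
   = (x * (payR R - payS p) < payQ p c beta - payS p).
  by move=> x; rewrite ltr_pdivlMr.
have key3 : forall x : R, ((payQ p c beta - payS p) / (payR R - payS p) <= x)
   = (payQ p c beta - payS p <= x * (payR R - payS p)).
  by move=> x; rewrite ler_pdivrMr.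
split.
  rewrite hRS /payQ /payS; field.
  by rewrite lt0r_neq0.
split.
  rewrite key3 => hle; elim=> [//|k IH] hk.
  case: k IH hk => [|k] IH hk; first by [].
  apply: (le_trans _ (IH isT)).
  rewrite -subr_le0 Vk_diff //.
  apply: mulr_ge0_le0; first by rewrite exprn_ge0 // ltW.
  by rewrite subr_le0.
rewrite key2 => hlt k hk.
rewrite -subr_gt0 Vk_diff //.
apply: mulr_gt0; first by rewrite exprn_gt0.
by rewrite subr_gt0.
Qed.
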